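(* Let $\mathcal{B}\subseteq\{1,2\}^3$ be a basic set, $X^{\mathcal{B}}$ the associated $S_2$-SFT and $F=\{F^{(a)},F^{(b)}\}$ its SNRE with sequences $(a_n),(b_n)$. Then $F$ is of one of the following four types: (1) equal growth type; (2) dominating type; (3) oscillating type; (4) cooperating type.
   Context: $S_2$ is the free semigroup on two generators, identified with finite words over $\{1,2\}$ (root $\epsilon$); alphabet $\{1,2\}$. A basic set $\mathcal{B}\subseteq\{1,2\}^3$ is a set of admissible 2-blocks $(i,i_1,i_2)$ and $X^{\mathcal{B}}$ the associated $S_2$-SFT. Its SNRE is $F^{(a)}(x,y)=\sum_{(1,i,j)\in\mathcal{B}}z_iz_j$, $F^{(b)}(x,y)=\sum_{(2,i,j)\in\mathcal{B}}z_iz_j$ ($z_1=x,z_2=y$), with $a_0=b_0=1$, $a_n=F^{(a)}(a_{n-1},b_{n-1})$, $b_n=F^{(b)}(a_{n-1},b_{n-1})$ for $n\ge1$ ($a_n$, $b_n$ are the numbers of admissible $n$-blocks with root colored $1$, resp. $2$). Types: equal growth: $a_n=b_n$ for all $n\ge1$. Dominating: either $a_n\ge b_n$ for all $n\ge1$ or $b_n\ge a_n$ for all $n\ge 1$. Oscillating: there are two infinite subsequences of $\mathbb{N}$ such that $a_n\ge b_n$ along the first and $a_n<b_n$ along the second. Cooperating: with $c_n=a_n+b_n$, one has $c_n=c_{n-1}^2+g_{n-1}$ for all $n\ge2$, where $g_m=G(a_m,b_m)$ for a polynomial $G$ with nonnegative integer coefficients and $g_m\le c_m^2$ for all $m$.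 *)

(* Defs.v *)
From mathcomp Require Import all_boot.
Set Implicit Arguments. Unset Strict Implicit. Unset Printing Implicit Defensive.

Definition color := 'I_2.
Definition col1 : color := ord0.
Definition col2 : color := ord_max.

(* A basic set: a set of admissible 2-blocks (i, i1, i2) in {1,2}^3. *)
Definition basic_set := {set color * color * color}.

Definition zvar (x y : nat) (i : color) : nat := if i == col1 then x else y.

Definition Fpoly (B : basic_set) (c : color) (x y : nat) : nat :=
  \sum_(i : color) \sum_(j : color)
     (if (c, i, j) \in B then zvar x y i * zvar x y j else 0).

Definition Fa (B : basic_set) := Fpoly B col1.
Definition Fb (B : basic_set) := Fpoly B col2.

Fixpoint ab_seq (B : basic_set) (n : nat) : nat * nat :=
  match n with
  | 0 => (1, 1)
  | n'.+1 => let p := ab_seq B n' in (Fa B p.1 p.2, Fb B p.1 p.2)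
  end.

Definition a_seq (B : basic_set) (n : nat) : nat := (ab_seq B n).1.
Definition b_seq (B : basic_set) (n : nat) : nat := (ab_seq B n).2.
Definition c_seq (B : basic_set) (n : nat) : nat := a_seq B n + b_seq B n.

(* Bivariate polynomials with nonnegative integer coefficients, as a finite
   list of monomials (coef, deg_x, deg_y). *)
Definition natpoly2 := seq (nat * nat * nat).
Definition eval2 (G : natpoly2) (x y : nat) : nat :=
  \sum_(m <- G) m.1.1 * x ^ m.1.2 * y ^ m.2.

Definition equal_growth_type (B : basic_set) : Prop :=
  forall n, 1 <= n -> a_seq B n = b_seq B n.

Definition dominating_type (B : basic_set) : Prop :=
  (forall n, 1 <= n -> b_seq B n <= a_seq B n) \/
  (forall n, 1 <= n -> a_seq B n <= b_seq B n).

Definition oscillating_type (B : basic_set) : Prop :=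
  (forall N, exists n, N <= n /\ b_seq B n <= a_seq B n) /\
  (forall N, exists n, N <= n /\ a_seq B n < b_seq B n).

Definition cooperating_type (B : basic_set) : Prop :=
  exists G : natpoly2,
    (forall n, 2 <= n ->
       c_seq B n = (c_seq B n.-1) ^ 2 + eval2 G (a_seq B n.-1) (b_seq B n.-1)) /\
    (forall m, eval2 G (a_seq B m) (b_seq B m) <= (c_seq B m) ^ 2).

(* Main.v *)
Require Import Defs.
From mathcomp Require Import all_boot.
From mathcomp Require Import zify.
From Stdlib Require Import Lia.
Set Implicit Arguments. Unset Strict Implicit.

Definition fpol (b11 b12 b21 b22 : bool) (x y : nat) : nat :=
  b11 * (x*x) + b12 * (x*y) + b21 * (y*x) + b22 * (y*y).

Lemma Fpoly_fpol B c x y : Fpoly B c x y =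
  fpol ((c,col1,col1) \in B) ((c,col1,col2) \in B) ((c,col2,col1) \in B) ((c,col2,col2) \in B) x y.
Proof.
rewrite /fpol /Fpoly !big_ord_recl !big_ord0 /= /zvar /=.
have -> : lift ord0 ord0 = col2 :> color by apply/val_inj.
rewrite !addn0 /col1; do 4 case: (_ \in B); by rewrite /= ?mul1n ?mul0n ?addn0 ?add0n ?addnA.
Qed.

Fixpoint sq (fa fb : nat -> nat -> nat) n : nat * nat :=
  match n with
  | 0 => (1, 1)
  | n'.+1 => let p := sq fa fb n' in (fa p.1 p.2, fb p.1 p.2)
  end.

Lemma sq_ext fa fb fa' fb' : (forall x y, fa x y = fa' x y) -> (forall x y, fb x y = fb' x y) ->
  forall n, sq fa fb n = sq fa' fb' n.
Proof. by move=> Ha Hb; elim => //= n ->; rewrite Ha Hb. Qed.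

Lemma ab_sq B n : ab_seq B n =
  sq (fpol ((col1,col1,col1) \in B) ((col1,col1,col2) \in B) ((col1,col2,col1) \in B) ((col1,col2,col2) \in B))
     (fpol ((col2,col1,col1) \in B) ((col2,col1,col2) \in B) ((col2,col2,col1) \in B) ((col2,col2,col2) \in B)) n.
Proof. by elim: n => //= n ->; rewrite /Fa /Fb !Fpoly_fpol. Qed.

Lemma inv_all fa fb (P : nat -> nat -> Prop) : P 1 1 ->
  (forall x y, P x y -> P (fa x y) (fb x y)) -> forall n, P (sq fa fb n).1 (sq fa fb n).2.
Proof. by move=> H1 Hs; elim => //= n IH; apply: Hs. Qed.

Lemma dom_gen B fa fb (Hs : forall n, ab_seq B n = sq fa fb n) (P : nat -> nat -> Prop) :
  P 1 1 -> (forall x y, P x y -> P (fa x y) (fb x y)) -> (forall x y, P x y -> y <= x) ->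
  dominating_type B.
Proof.
move=> H1 HP Hd; left => n _; rewrite /a_seq /b_seq Hs; apply: Hd; exact: inv_all.
Qed.

Lemma dom_gen2 B fa fb (Hs : forall n, ab_seq B n = sq fa fb n) (P : nat -> nat -> Prop) :
  P 1 1 -> (forall x y, P x y -> P (fa x y) (fb x y)) -> (forall x y, P x y -> x <= y) ->
  dominating_type B.
Proof.
move=> H1 HP Hd; right => n _; rewrite /a_seq /b_seq Hs; apply: Hd; exact: inv_all.
Qed.

Lemma coop_gen B fa fb (Hs : forall n, ab_seq B n = sq fa fb n) al be ga
  (Hsum : forall x y, fa x y + fb x y = al*(x*x) + be*(x*y) + ga*(y*y)) :
  0 < al -> al <= 2 -> 1 < be -> be <= 4 -> 0 < ga -> ga <= 2 -> cooperating_type B.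
Proof.
move=> h1 h2 h3 h4 h5 h6.
exists [:: (al.-1,2,0); (be-2,1,1); (ga.-1,0,2)].
have Ev : forall x y, eval2 [:: (al.-1,2,0); (be-2,1,1); (ga.-1,0,2)] x y
   = al.-1 * (x*x) + (be-2)*(x*y) + ga.-1*(y*y).
  move=> x y; rewrite /eval2 !big_cons big_nil /=; nia.
split.
- move=> [|[|m]] // _; rewrite /c_seq /a_seq /b_seq !Hs /= Hsum Ev; nia.
- move=> m; rewrite Ev /c_seq; nia.
Qed.

Lemma eq_gen B fa fb (Hs : forall n, ab_seq B n = sq fa fb n) p1 q1 r1 p2 q2 r2
  (Ha : forall x y, fa x y = p1*(x*x) + q1*(x*y) + r1*(y*y))
  (Hb : forall x y, fb x y = p2*(x*x) + q2*(x*y) + r2*(y*y)) :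
  p1 + q1 + r1 = p2 + q2 + r2 -> equal_growth_type B.
Proof.
move=> E n _; rewrite /a_seq /b_seq Hs.
apply: (inv_all (P := fun x y => x = y)) => // x y ->.
rewrite Ha Hb; nia.
Qed.

Lemma dom1_gen B fa fb (Hs : forall n, ab_seq B n = sq fa fb n) p1 q1 r1 p2 q2 r2
  (Ha : forall x y, fa x y = p1*(x*x) + q1*(x*y) + r1*(y*y))
  (Hb : forall x y, fb x y = p2*(x*x) + q2*(x*y) + r2*(y*y)) :
  p2 <= p1 -> 2*p2 + q2 <= 2*p1 + q1 -> p2 + q2 + r2 <= p1 + q1 + r1 -> dominating_type B.
Proof.
move=> c1 c2 c3.
apply: (dom_gen Hs (P := fun x y => y <= x)) => // x y hyx.
rewrite Ha Hb -(subnKC hyx); set t := x - y.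
have E p q r : p*((y+t)*(y+t)) + q*((y+t)*y) + r*(y*y) = p*(t*t) + (2*p+q)*(t*y) + (p+q+r)*(y*y).
  nia.
rewrite !E; apply: leq_add; [apply: leq_add|]; exact: leq_mul.
Qed.

Lemma dom2_gen B fa fb (Hs : forall n, ab_seq B n = sq fa fb n) p1 q1 r1 p2 q2 r2
  (Ha : forall x y, fa x y = p1*(x*x) + q1*(x*y) + r1*(y*y))
  (Hb : forall x y, fb x y = p2*(x*x) + q2*(x*y) + r2*(y*y)) :
  r1 <= r2 -> 2*r1 + q1 <= 2*r2 + q2 -> p1 + q1 + r1 <= p2 + q2 + r2 -> dominating_type B.
Proof.
move=> c1 c2 c3.
apply: (dom_gen2 Hs (P := fun x y => x <= y)) => // x y hxy.
rewrite Ha Hb -(subnKC hxy); set t := y - x.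
have E p q r : p*(x*x) + q*(x*(x+t)) + r*((x+t)*(x+t)) = r*(t*t) + (2*r+q)*(t*x) + (p+q+r)*(x*x).
  nia.
rewrite !E; apply: leq_add; [apply: leq_add|]; exact: leq_mul.
Qed.

Lemma s22 B fa fb (Hs : forall n, ab_seq B n = sq fa fb n) p1 q1 r1 p2 q2 r2
  (Ha : forall x y, fa x y = p1*(x*x) + q1*(x*y) + r1*(y*y))
  (Hb : forall x y, fb x y = p2*(x*x) + q2*(x*y) + r2*(y*y)) :
  (p1, q1, r1, p2, q2, r2) = (0, 2, 0, 1, 0, 0) -> dominating_type B.
Proof.
case=> e1 e2 e3 e4 e5 e6; subst.
apply: (dom_gen Hs (P := fun x y => y <= x /\ x <= 2 * y)) => //; last by move=> x y [].
move=> x y [h1 h2]; rewrite Ha Hb; split; nia.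
Qed.

Lemma s104 B fa fb (Hs : forall n, ab_seq B n = sq fa fb n) p1 q1 r1 p2 q2 r2
  (Ha : forall x y, fa x y = p1*(x*x) + q1*(x*y) + r1*(y*y))
  (Hb : forall x y, fb x y = p2*(x*x) + q2*(x*y) + r2*(y*y)) :
  (p1, q1, r1, p2, q2, r2) = (0, 0, 1, 0, 2, 0) -> dominating_type B.
Proof.
case=> e1 e2 e3 e4 e5 e6; subst.
apply: (dom_gen2 Hs (P := fun x y => x <= y /\ y <= 2 * x)) => //; last by move=> x y [].
move=> x y [h1 h2]; rewrite Ha Hb; split; nia.
Qed.

Lemma osc_gen B fa fb (Hs : forall n, ab_seq B n = sq fa fb n) (P Q : nat -> nat -> Prop) n0 :
  P (sq fa fb n0).1 (sq fa fb n0).2 ->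
  (forall x y, P x y -> Q (fa x y) (fb x y)) ->
  (forall x y, Q x y -> P (fa x y) (fb x y)) ->
  (forall x y, P x y -> y <= x) -> (forall x y, Q x y -> x < y) -> oscillating_type B.
Proof.
move=> H0 PQ QP Pd Qd.
have K : forall k, P (sq fa fb (n0 + 2*k)).1 (sq fa fb (n0 + 2*k)).2 /\
                   Q (sq fa fb (n0 + 2*k).+1).1 (sq fa fb (n0 + 2*k).+1).2.
  elim=> [|k [_ IH]]; first by rewrite muln0 addn0; split => //=; apply: PQ.
  have -> : n0 + 2 * k.+1 = (n0 + 2*k).+2 by lia.
  have Hp : P (sq fa fb (n0 + 2*k).+2).1 (sq fa fb (n0 + 2*k).+2).2 by apply: QP.
  by split => //=; apply: PQ.
split=> N.
- exists (n0 + 2*N); split; first lia.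
  rewrite /a_seq /b_seq Hs; apply: Pd; exact: (K N).1.
- exists (n0 + 2*N).+1; split; first lia.
  rewrite /a_seq /b_seq Hs; apply: Qd; exact: (K N).2.
Qed.

Lemma s26 B fa fb (Hs : forall n, ab_seq B n = sq fa fb n) p1 q1 r1 p2 q2 r2
  (Ha : forall x y, fa x y = p1*(x*x) + q1*(x*y) + r1*(y*y))
  (Hb : forall x y, fb x y = p2*(x*x) + q2*(x*y) + r2*(y*y)) :
  (p1, q1, r1, p2, q2, r2) = (0, 1, 1, 1, 0, 0) -> oscillating_type B.
Proof.
case=> e1 e2 e3 e4 e5 e6; subst.
apply: (osc_gen Hs (P := fun x y => 3*y <= x /\ 0 < x) (Q := fun x y => 9*x <= 4*y /\ 0 < y) (n0 := 3)).
- by rewrite (sq_ext Ha Hb).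
- move=> x y [h1 h2]; rewrite Ha Hb; split; nia.
- move=> x y [h1 h2]; rewrite Ha Hb; split; nia.
- move=> x y [h1 h2]; lia.
- move=> x y [h1 h2]; lia.
Qed.

Lemma s56 B fa fb (Hs : forall n, ab_seq B n = sq fa fb n) p1 q1 r1 p2 q2 r2
  (Ha : forall x y, fa x y = p1*(x*x) + q1*(x*y) + r1*(y*y))
  (Hb : forall x y, fb x y = p2*(x*x) + q2*(x*y) + r2*(y*y)) :
  (p1, q1, r1, p2, q2, r2) = (0, 0, 1, 1, 1, 0) -> oscillating_type B.
Proof.
case=> e1 e2 e3 e4 e5 e6; subst.
apply: (osc_gen Hs (P := fun x y => 9*y <= 4*x /\ 0 < x) (Q := fun x y => 3*x <= y /\ 0 < y) (n0 := 4)).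
- by rewrite (sq_ext Ha Hb).
- move=> x y [h1 h2]; rewrite Ha Hb; split; nia.
- move=> x y [h1 h2]; rewrite Ha Hb; split; nia.
- move=> x y [h1 h2]; lia.
- move=> x y [h1 h2]; lia.
Qed.

Lemma key B (b1 b2 b3 b4 b5 b6 b7 b8 : bool)
  (Hs : forall n, ab_seq B n = sq (fpol b1 b2 b3 b4) (fpol b5 b6 b7 b8) n) :
  equal_growth_type B \/ dominating_type B \/ oscillating_type B \/ cooperating_type B.
Proof.
have Ha : forall x y, fpol b1 b2 b3 b4 x y = b1*(x*x) + (b2+b3)*(x*y) + b4*(y*y).
  by move=> x y; rewrite /fpol (mulnC y x); lia.
have Hb : forall x y, fpol b5 b6 b7 b8 x y = b5*(x*x) + (b6+b7)*(x*y) + b8*(y*y).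
  by move=> x y; rewrite /fpol (mulnC y x); lia.
have Hsum : forall x y, fpol b1 b2 b3 b4 x y + fpol b5 b6 b7 b8 x y =
   (b1+b5)*(x*x) + (b2+b3+(b6+b7))*(x*y) + (b4+b8)*(y*y).
  by move=> x y; rewrite Ha Hb; lia.
move: Hs Ha Hb Hsum.
generalize (fpol b1 b2 b3 b4) (fpol b5 b6 b7 b8) => fa fb.
move: b1 b2 b3 b4 b5 b6 b7 b8.
do 8 case; move=> Hs Ha Hb Hsum;
first [ (right; right; right; apply: (coop_gen Hs Hsum); by [])
      | (left; apply: (eq_gen Hs Ha Hb); by [])
      | (right; left; apply: (dom1_gen Hs Ha Hb); by [])
      | (right; left; apply: (dom2_gen Hs Ha Hb); by [])
      | (right; left; apply: (s22 Hs Ha Hb); by [])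
      | (right; left; apply: (s104 Hs Ha Hb); by [])
      | (right; right; left; apply: (s26 Hs Ha Hb); by [])
      | (right; right; left; apply: (s56 Hs Ha Hb); by []) ].
Qed.

Theorem theorem3 (B : basic_set) :
  equal_growth_type B \/ dominating_type B \/ oscillating_type B \/ cooperating_type B.
Proof. exact: key (ab_sq B). Qed.
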